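(* Let $T \ge 1$ be an integer and $p^* \in (0,1]$. For integers $l \ge 1$ and $0 \le n \le l-1$ with $l-n \le T$ put $$P^l(n)=\frac{\prod_{i=0}^{l-n-1}\left(1-\frac{i}{T}\right)}{T^{n}}.$$ Fix a sequence $L_1, L_2, L_3,\dots$ of pairwise distinct items (loopback 3-tuples). A device $D$ is modeled by a function $g_D$ from $\{L_1,L_2,\dots\}$ to $\{0,1,\dots,T-1\}$. For $i\ge 1$, the collision structure of $D$ after $i$ iterations is the partition of $\{L_1,\dots,L_i\}$ into the nonempty fibers of $g_D$ restricted to $\{L_1,\dots,L_i\}$; let $n_i(D)$ be $i$ minus the number of blocks of this partition (the number of independent collisions). The phase-2 procedure processes $L_1, L_2,\dots$ in this fixed order and stops at the least $i$ with $P^i(n_i(D)) \le p^*$; call this index $l(D)$ (assumed to exist). Its output, the device ID of $D$, is the pair $(C_D, l(D))$, where $C_D$ is the set of all pairs $(L_j, B)$ with $j \le l(D)$, $L_j$ not the first (lowest-index) element of its block in the collision structure after $l(D)$ iterations, and $B$ the first element of that block. Let $D$ and $D'$ be devices, and let $l=l(D)$. If the collision structure of $D'$ after $l$ iterations equals the collision structure of $D$ after $l$ iterations, then $D'$ and $D$ have identical device IDs, i.e. $l(D')=l$ and $C_{D'}=C_D$.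
   Context: This models the device-ID computation for the Double-Hash Port Selection algorithm: each loopback 3-tuple $L_i$ is hashed by a keyed hash into one of $T$ perturbation-table cells, and the attacker only observes which tuples share a cell. The order in which the tuples $L_i$ are tested is deterministic and the same for all devices. *)

(* Defs.v *)
From mathcomp Require Import all_boot all_order all_algebra.
Set Implicit Arguments. Unset Strict Implicit. Unset Printing Implicit Defensive.
Import Order.TTheory GRing.Theory Num.Theory.
Local Open Scope ring_scope.

Definition Pl (R : realFieldType) (T l n : nat) : R :=
  (\prod_(i < l - n) (1 - i%:R / T%:R)) / (T%:R ^+ n).

Definition iset (X : Type) := X -> Prop.

Definition coll_struct (X : Type) (T : nat) (L : nat -> X) (g : X -> 'I_T)
  (i : nat) : iset (iset X) :=
  fun B => exists k, (1 <= k <= i)%N /\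
    B = (fun x => exists j, (1 <= j <= i)%N /\ x = L j /\ g x = g (L k)).

(* Number of blocks of the collision structure after i iterations
   (= number of distinct values of g on L_1..L_i). *)
Definition nblocks (X : Type) (T : nat) (L : nat -> X) (g : X -> 'I_T) (i : nat) : nat :=
  size (undup [seq g (L j) | j <- iota 1 i]).

Definition ncoll (X : Type) (T : nat) (L : nat -> X) (g : X -> 'I_T) (i : nat) : nat :=
  (i - nblocks L g i)%N.

Definition is_stop (R : realFieldType) (p : R) (X : Type) (T : nat) (L : nat -> X)
  (g : X -> 'I_T) (l : nat) : Prop :=
  [/\ (1 <= l)%N, Pl R T l (ncoll L g l) <= p &
      forall j, (1 <= j < l)%N -> ~ (Pl R T j (ncoll L g j) <= p)].

Definition devC (X : Type) (T : nat) (L : nat -> X) (g : X -> 'I_T) (l : nat)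
  : iset (X * X) :=
  fun xb => exists j k (B : iset X),
    (1 <= j <= l)%N /\ coll_struct L g l B /\ B (L j) /\
    (1 <= k)%N /\ B (L k) /\ (forall m, (1 <= m < k)%N -> ~ B (L m)) /\
    k <> j /\ xb = (L j, L k).

(* Main.v *)
Require Import Defs.
From mathcomp Require Import all_boot all_order all_algebra.
Import Order.TTheory GRing.Theory Num.Theory.
Local Open Scope ring_scope.

Lemma undup_size_eq (A B : eqType) (s : seq nat) (f : nat -> A) (h : nat -> B) :
  {in s &, forall x y, (f x == f y) = (h x == h y)} ->
  size (undup (map f s)) = size (undup (map h s)).
Proof.
elim: s => [//|a s IH] H /=.
have H' : {in s &, forall x y, (f x == f y) = (h x == h y)}.
  by move=> x y xs ys; apply: H; rewrite inE ?xs ?ys orbT.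
have -> : (f a \in map f s) = (h a \in map h s).
  apply/mapP/mapP => -[y ys e]; exists y => //; apply/eqP.
    by rewrite eq_sym -H ?inE ?ys ?eqxx ?orbT // e.
  by rewrite eq_sym H ?inE ?ys ?eqxx ?orbT // e.
by case: ifP => _ /=; rewrite IH.
Qed.

Theorem lemma1 (R : realFieldType) (T : nat) (hT : (1 <= T)%N)
  (p : R) (hp0 : 0 < p) (hp1 : p <= 1)
  (X : Type) (L : nat -> X) (hL : forall i j, (1 <= i)%N -> (1 <= j)%N -> L i = L j -> i = j)
  (g g' : X -> 'I_T) (l : nat) :
  is_stop p L g l ->
  coll_struct L g' l = coll_struct L g l ->
  is_stop p L g' l /\ devC L g' l = devC L g l.
Proof.
move=> Hs Hc; split; last by rewrite /devC Hc.
have key : forall j k, (1 <= j <= l)%N -> (1 <= k <= l)%N ->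
    (g' (L j) == g' (L k)) = (g (L j) == g (L k)).
  move=> j k Hj Hk.
  pose B' := fun x => exists j0, (1 <= j0 <= l)%N /\ x = L j0 /\ g' x = g' (L k).
  have : coll_struct L g' l B' by exists k.
  rewrite Hc => -[m [Hm EB]].
  have Bk : B' (L k) by exists k.
  rewrite EB in Bk; case: Bk => j0 [_ [_ Ekm]].
  apply/eqP/eqP => E.
    have Bj : B' (L j) by exists j.
    rewrite EB in Bj; case: Bj => j1 [_ [_ Ejm]].
    by rewrite Ejm Ekm.
  have Bj : B' (L j).
    rewrite EB; exists j; split => //; split => //; by rewrite E.
  by case: Bj => j1 [_ [_ ->]].
have Hn : forall i, (i <= l)%N -> ncoll L g' i = ncoll L g i.
  move=> i il; rewrite /ncoll /nblocks (@undup_size_eq _ _ _ (fun j => g' (L j)) (fun j => g (L j))) //.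
  move=> x y; rewrite !mem_iota => /andP[x1 x2] /andP[y1 y2]; apply: key.
    by apply/andP; split => //; move: x2 il; rewrite add1n ltnS; apply: leq_trans.
  by apply/andP; split => //; move: y2 il; rewrite add1n ltnS; apply: leq_trans.
case: Hs => H1 H2 H3; split => //; first by rewrite Hn.
move=> j /andP[j1 jl]; rewrite Hn ?(ltnW jl) //; apply: H3; by rewrite j1.
Qed.
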